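(* For any sets $X,Y$, the map $(-)^\dagger:(X\to\mathcal W(Y))\to(\mathcal W(X)\to\mathcal W(Y))$ is Scott continuous, where function spaces carry the pointwise order.
   Context: $\mathcal A=\langle U,+,\cdot,\mathbf 0,\mathbf 1\rangle$ is a partial semiring ($+$ commutative, associative, possibly partial, unit $\mathbf 0$; $\cdot$ total, associative, unit $\mathbf 1$; two-sided distributivity; $\mathbf 0$ annihilates), naturally ordered ($u\le v$ iff $\exists w.\,u+w=v$ is a partial order), Scott continuous (for every directed $D\subseteq U$ and $y$: $\sup_{x\in D}(x+y)=(\sup D)+y$, $\sup_{x\in D}(x\cdot y)=(\sup D)\cdot y$, $\sup_{x\in D}(y\cdot x)=y\cdot\sup D$), with a top element. Infinite sums are suprema of finite partial sums. $\mathcal W(X)$: maps $m:X\to U$ with countable support $\mathrm{supp}(m)=\{x:m(x)\neq\mathbf 0\}$ and defined mass $\sum_{x\in\mathrm{supp}(m)}m(x)$, ordered by $m_1\sqsubseteq m_2$ iff $m_1+m=m_2$ for some $m$ (operations pointwise). Functions $f,g:X\to\mathcal W(Y)$ are ordered by $f\sqsubseteq^\bullet g$ iff $f(x)\sqsubseteq g(x)$ for all $x$; similarly for functions $\mathcal W(X)\to\mathcal W(Y)$. $f^\dagger(m)(y)=\sum_{x\in\mathrm{supp}(m)}m(x)\cdot f(x)(y)$. Scott continuous means preserving suprema of directed sets. *)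

(* Defs.v *)
From Stdlib Require Import List ClassicalEpsilon.
Import ListNotations.
Set Implicit Arguments.

Record PSR := mkPSR {
  car :> Type;
  padd : car -> car -> option car;
  pmul : car -> car -> car;
  pzero : car;
  pone : car }.

Definition obind {T : Type} (o : option T) (f : T -> option T) : option T :=
  match o with Some a => f a | None => None end.

Section Defs.
Variable A : PSR.

Definition le (u v : A) : Prop := exists w, padd A u w = Some v.

Definition directed {T : Type} (R : T -> T -> Prop) (D : T -> Prop) : Prop :=
  (exists x, D x) /\
  forall x y, D x -> D y -> exists z, D z /\ R x z /\ R y z.

Definition is_sup_in {T : Type} (P : T -> Prop) (R : T -> T -> Prop)
  (D : T -> Prop) (s : T) : Prop :=
  P s /\ (forall x, D x -> R x s) /\
  (forall t, P t -> (forall x, D x -> R x t) -> R s t).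

Definition is_sup (D : A -> Prop) (s : A) : Prop :=
  is_sup_in (fun _ => True) le D s.

Record PSR_axioms : Prop := {
  add_comm : forall u v, padd A u v = padd A v u;
  add_assoc : forall u v w,
    obind (padd A u v) (fun a => padd A a w) = obind (padd A v w) (fun a => padd A u a);
  add_zero : forall u, padd A u (pzero A) = Some u;
  mul_assoc : forall u v w, pmul A u (pmul A v w) = pmul A (pmul A u v) w;
  mul_one_l : forall u, pmul A (pone A) u = u;
  mul_one_r : forall u, pmul A u (pone A) = u;
  distr_l : forall u v w s, padd A v w = Some s ->
    padd A (pmul A u v) (pmul A u w) = Some (pmul A u s);
  distr_r : forall u v w s, padd A v w = Some s ->
    padd A (pmul A v u) (pmul A w u) = Some (pmul A s u);
  mul_zero_l : forall u, pmul A (pzero A) u = pzero A;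
  mul_zero_r : forall u, pmul A u (pzero A) = pzero A;
  le_refl : forall u, le u u;
  le_trans : forall u v w, le u v -> le v w -> le u w;
  le_antisym : forall u v, le u v -> le v u -> u = v;
  has_top : exists t, forall u, le u t;
  (* sup D exists for every directed D (presupposed by the continuity axioms) *)
  dir_complete : forall D, directed le D -> exists s, is_sup D s;
  (* sup_{x in D} (x + y) = (sup D) + y, as a Kleene equality *)
  cont_add : forall D s y, directed le D -> is_sup D s -> forall v,
    padd A s y = Some v <->
    ((forall x, D x -> exists w, padd A x y = Some w) /\
     is_sup (fun w => exists x, D x /\ padd A x y = Some w) v);
  cont_mul_l : forall D s y, directed le D -> is_sup D s ->
    is_sup (fun w => exists x, D x /\ w = pmul A x y) (pmul A s y);
  cont_mul_r : forall D s y, directed le D -> is_sup D s ->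
    is_sup (fun w => exists x, D x /\ w = pmul A y x) (pmul A y s) }.

Fixpoint fsum {I : Type} (u : I -> A) (l : list I) : option A :=
  match l with
  | [] => Some (pzero A)
  | x :: l' => obind (fsum u l') (fun a => padd A (u x) a)
  end.

Definition has_sum {I : Type} (u : I -> A) (S : I -> Prop) (v : A) : Prop :=
  (forall l, NoDup l -> (forall i, In i l -> S i) -> exists w, fsum u l = Some w) /\
  is_sup (fun w => exists l, NoDup l /\ (forall i, In i l -> S i) /\ fsum u l = Some w) v.

(** the value of the sum (unspecified if the sum is undefined) *)
Definition isum {I : Type} (u : I -> A) (S : I -> Prop) : A :=
  epsilon (inhabits (pzero A)) (has_sum u S).

Definition supp {X : Type} (m : X -> A) : X -> Prop := fun x => m x <> pzero A.

Definition countable {X : Type} (S : X -> Prop) : Prop :=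
  exists g : X -> nat, forall x y, S x -> S y -> g x = g y -> x = y.

Definition isW {X : Type} (m : X -> A) : Prop :=
  countable (supp m) /\ exists v, has_sum m (supp m) v.

Definition leW {X : Type} (m1 m2 : X -> A) : Prop :=
  exists m, isW m /\ forall x, padd A (m1 x) (m x) = Some (m2 x).

Definition isKl {X Y : Type} (f : X -> Y -> A) : Prop := forall x, isW (f x).
Definition leKl {X Y : Type} (f g : X -> Y -> A) : Prop := forall x, leW (f x) (g x).
Definition isWW {X Y : Type} (h : (X -> A) -> (Y -> A)) : Prop :=
  forall m, isW m -> isW (h m).
Definition leWW {X Y : Type} (h k : (X -> A) -> (Y -> A)) : Prop :=
  forall m, isW m -> leW (h m) (k m).

Definition dagger {X Y : Type} (f : X -> Y -> A) (m : X -> A) : Y -> A :=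
  fun y => isum (fun x => pmul A (m x) (f x y)) (supp m).

End Defs.

(* Main.v *)
Require Import Defs.
From Stdlib Require Import List ClassicalEpsilon Classical Permutation Cantor.
Import ListNotations.

Section S.
Variable A : PSR.
Hypothesis HA : PSR_axioms A.

Lemma add0l (u : A) : padd A (pzero A) u = Some u.
Proof. rewrite (add_comm HA). apply (add_zero HA). Qed.

Definition oadd (o1 o2 : option A) : option A :=
  match o1, o2 with Some a, Some b => padd A a b | _, _ => None end.

Lemma oadd_comm o1 o2 : oadd o1 o2 = oadd o2 o1.
Proof. destruct o1, o2; simpl; auto; apply (add_comm HA). Qed.

Lemma oadd_assoc o1 o2 o3 : oadd (oadd o1 o2) o3 = oadd o1 (oadd o2 o3).
Proof.
  destruct o1 as [u|], o2 as [v|], o3 as [w|]; simpl.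
  - exact (add_assoc HA u v w).
  - destruct (padd A u v); reflexivity.
  - reflexivity.
  - reflexivity.
  - destruct (padd A v w); reflexivity.
  - reflexivity.
  - reflexivity.
  - reflexivity.
Qed.

Lemma oadd_0l o : oadd (Some (pzero A)) o = o.
Proof. destruct o; simpl; auto using add0l. Qed.

Lemma oadd_4 a b c d : oadd (oadd a b) (oadd c d) = oadd (oadd a c) (oadd b d).
Proof.
  rewrite !oadd_assoc. f_equal. rewrite <- !oadd_assoc. f_equal. apply oadd_comm.
Qed.

Definition osum {I : Type} (u : I -> option A) (l : list I) : option A :=
  fold_right (fun x acc => oadd (u x) acc) (Some (pzero A)) l.

Lemma osum_nil {I} (u : I -> option A) : osum u [] = Some (pzero A).
Proof. reflexivity. Qed.
Lemma osum_cons {I} (u : I -> option A) x l : osum u (x :: l) = oadd (u x) (osum u l).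
Proof. reflexivity. Qed.
Arguments osum : simpl never.

Lemma fsum_osum {I} (u : I -> A) l : fsum A u l = osum (fun i => Some (u i)) l.
Proof. induction l; simpl; auto. rewrite osum_cons, <- IHl. destruct (fsum A u l); reflexivity. Qed.

Lemma osum_app {I} (u : I -> option A) l1 l2 :
  osum u (l1 ++ l2) = oadd (osum u l1) (osum u l2).
Proof.
  induction l1; cbn [app]. now rewrite osum_nil, oadd_0l. rewrite !osum_cons, IHl1. now rewrite oadd_assoc.
Qed.

Lemma osum_perm {I} (u : I -> option A) {l l'} : Permutation l l' -> osum u l = osum u l'.
Proof.
  induction 1; rewrite ?osum_cons; auto.
  - now rewrite IHPermutation.
  - rewrite <- !oadd_assoc. now rewrite (oadd_comm (u y)).
  - congruence.
Qed.

Lemma osum_add {I} (u v : I -> option A) l :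
  osum (fun i => oadd (u i) (v i)) l = oadd (osum u l) (osum v l).
Proof.
  induction l; rewrite ?osum_nil, ?osum_cons. now rewrite oadd_0l. rewrite IHl. apply oadd_4.
Qed.

Lemma osum_zero {I} (l : list I) : osum (fun _ => Some (pzero A)) l = Some (pzero A).
Proof. induction l; rewrite ?osum_cons; auto. rewrite IHl. apply oadd_0l. Qed.

Lemma osum_ext {I} (u v : I -> option A) l :
  (forall i, In i l -> u i = v i) -> osum u l = osum v l.
Proof.
  induction l; rewrite ?osum_cons; intros H; auto. rewrite H by (simpl; auto). rewrite IHl; auto.
  intros; apply H; simpl; auto.
Qed.

Lemma fubini {X Y} (F : X -> Y -> option A) K L :
  osum (fun x => osum (fun y => F x y) L) K = osum (fun y => osum (fun x => F x y) K) L.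
Proof.
  induction K; rewrite ?osum_cons. rewrite osum_nil. symmetry. apply osum_zero.
  rewrite IHK. rewrite <- osum_add. apply osum_ext. intros; now rewrite osum_cons.
Qed.

Lemma osum_mul_l {I} c (u : I -> A) l a :
  osum (fun i => Some (u i)) l = Some a ->
  osum (fun i => Some (pmul A c (u i))) l = Some (pmul A c a).
Proof.
  revert a; induction l; rewrite ?osum_nil, ?osum_cons; intros a0 H.
  - inversion H. now rewrite (mul_zero_r HA).
  - destruct (osum (fun i => Some (u i)) l) as [b|] eqn:E; simpl in H; try discriminate.
    rewrite (IHl b eq_refl). simpl. now apply (distr_l HA).
Qed.

Lemma osum_mul_r {I} c (u : I -> A) l a :
  osum (fun i => Some (u i)) l = Some a ->
  osum (fun i => Some (pmul A (u i) c)) l = Some (pmul A a c).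
Proof.
  revert a; induction l; rewrite ?osum_nil, ?osum_cons; intros a0 H.
  - inversion H. now rewrite (mul_zero_l HA).
  - destruct (osum (fun i => Some (u i)) l) as [b|] eqn:E; simpl in H; try discriminate.
    rewrite (IHl b eq_refl). simpl. now apply (distr_r HA).
Qed.

Lemma le_0 (u : A) : le A (pzero A) u.
Proof. exists u. apply add0l. Qed.

Lemma le_addl {u v r : A} : padd A u v = Some r -> le A u r.
Proof. intros H; now exists v. Qed.
Lemma le_addr {u v r : A} : padd A u v = Some r -> le A v r.
Proof. intros H; exists u. now rewrite (add_comm HA). Qed.

Lemma assoc1 {u v w a r : A} : padd A u v = Some a -> padd A a w = Some r ->
  exists b, padd A v w = Some b /\ padd A u b = Some r.
Proof.
  intros H1 H2. pose proof (add_assoc HA u v w) as E. rewrite H1 in E. simpl in E.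
  rewrite H2 in E. destruct (padd A v w) as [b|]; simpl in E; try discriminate. eauto.
Qed.

Lemma assoc2 {u v w b r : A} : padd A v w = Some b -> padd A u b = Some r ->
  exists a, padd A u v = Some a /\ padd A a w = Some r.
Proof.
  intros H1 H2. pose proof (add_assoc HA u v w) as E. rewrite H1 in E. simpl in E.
  rewrite H2 in E. destruct (padd A u v) as [a|]; simpl in E; try discriminate. eauto.
Qed.

Lemma plus_mono {a a' b b' c' : A} : le A a a' -> le A b b' -> padd A a' b' = Some c' ->
  exists c, padd A a b = Some c /\ le A c c'.
Proof.
  intros [w1 H1] [w2 H2] H.
  (* (a + w1) + b' = c' -> a + (w1 + b') *)
  destruct (assoc1 H1 H) as [z [Hz1 Hz2]].
  (* w1 + (b + w2) = z -> (w1 + b) + w2 = z *)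
  destruct (assoc2 H2 Hz1) as [z' [Hz'1 Hz'2]].
  rewrite (add_comm HA) in Hz'1.
  (* a + (z' + w2) = c' -> (a + z') + w2 = c' *)
  destruct (assoc2 Hz'2 Hz2) as [p [Hp1 Hp2]].
  (* a + (b + w1) = p -> (a+b) + w1 = p *)
  destruct (assoc2 Hz'1 Hp1) as [c [Hc1 Hc2]].
  exists c; split; auto.
  apply (le_trans HA) with p; [exact (le_addl Hc2) | exact (le_addl Hp2)].
Qed.

Lemma mul_mono_l (c : A) {a b : A} : le A a b -> le A (pmul A c a) (pmul A c b).
Proof. intros [w H]. exists (pmul A c w). now apply (distr_l HA). Qed.
Lemma mul_mono_r (c : A) {a b : A} : le A a b -> le A (pmul A a c) (pmul A b c).
Proof. intros [w H]. exists (pmul A w c). now apply (distr_r HA). Qed.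

Lemma osum_mono {I} (u v : I -> A) l b :
  (forall i, In i l -> le A (u i) (v i)) ->
  osum (fun i => Some (v i)) l = Some b ->
  exists a, osum (fun i => Some (u i)) l = Some a /\ le A a b.
Proof.
  revert b; induction l; rewrite ?osum_nil, ?osum_cons; intros b0 Hle H.
  - exists (pzero A); split; auto. inversion H; apply (le_refl HA).
  - destruct (osum (fun i => Some (v i)) l) as [b|] eqn:E; simpl in H; try discriminate.
    destruct (IHl b (fun i Hi => Hle i (or_intror Hi)) eq_refl) as [a1 [Ha1 Hle1]].
    rewrite Ha1. simpl. simpl in Hle. eapply plus_mono; eauto.
Qed.

Lemma perm_incl {I} {l1 l : list I} : NoDup l1 -> incl l1 l -> NoDup l ->
  exists l2, Permutation l (l1 ++ l2).
Proof.
  revert l; induction l1 as [|a l1 IH]; intros l N1 Hi N.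
  - exists l; auto.
  - assert (Ha : In a l) by (apply Hi; left; auto).
    destruct (in_split _ _ Ha) as [p [q ->]].
    inversion N1; subst.
    destruct (IH (p ++ q)) as [l2 Hl2]; auto.
    + intros z Hz. assert (In z (p ++ a :: q)) by (apply Hi; right; auto).
      apply in_app_or in H. destruct H as [H|[H|H]]; apply in_or_app; auto.
      subst; contradiction.
    + eapply NoDup_remove_1; eauto.
    + exists l2. simpl. eapply perm_trans. apply Permutation_sym, Permutation_middle.
      now constructor.
Qed.

Lemma osum_sub {I} {u : I -> option A} {l1 l b} :
  NoDup l1 -> incl l1 l -> NoDup l -> osum u l = Some b ->
  exists a, osum u l1 = Some a /\ le A a b.
Proof.
  intros N1 Hi N H. destruct (perm_incl N1 Hi N) as [l2 P].
  rewrite (osum_perm u P), osum_app in H.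
  destruct (osum u l1) as [a|], (osum u l2) as [c|]; simpl in H; try discriminate.
  exists a; split; auto. exact (le_addl H).
Qed.

Lemma nodup_ex {I} (l : list I) : exists l', NoDup l' /\ forall x, In x l' <-> In x l.
Proof.
  induction l as [|a l [l' [N H]]].
  - exists []; split; [constructor | tauto].
  - destruct (classic (In a l')).
    + exists l'; split; auto. intros x; rewrite H. simpl; split; auto.
      intros [->|]; auto. now apply H.
    + exists (a :: l'); split. now constructor. intros x; simpl; rewrite H; tauto.
Qed.

Lemma sup_unique {D : A -> Prop} {s s'} : is_sup A D s -> is_sup A D s' -> s = s'.
Proof.
  intros [_ [H1 H2]] [_ [H1' H2']]. apply (le_antisym HA); auto.
Qed.


Definition psums {I} (u : I -> A) (S : I -> Prop) : A -> Prop :=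
  fun w => exists l, NoDup l /\ (forall i, In i l -> S i) /\ fsum A u l = Some w.

Lemma has_sum_unique {I} (u : I -> A) S v v' : has_sum A u S v -> has_sum A u S v' -> v = v'.
Proof. intros [_ H] [_ H']. exact (sup_unique H H'). Qed.

Lemma isum_eq {I} (u : I -> A) S v : has_sum A u S v -> isum A u S = v.
Proof.
  intros H. unfold isum.
  pose proof (epsilon_spec (inhabits (pzero A)) (has_sum A u S) (ex_intro _ v H)) as H'.
  exact (has_sum_unique _ _ _ _ H' H).
Qed.

Lemma nodup_union {I} (S : I -> Prop) (l1 l2 : list I) :
  (forall i, In i l1 -> S i) -> (forall i, In i l2 -> S i) ->
  exists l, NoDup l /\ (forall i, In i l -> S i) /\ incl l1 l /\ incl l2 l.
Proof.
  intros H1 H2. destruct (nodup_ex (l1 ++ l2)) as [l [N H]].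
  exists l; repeat split; auto.
  - intros i Hi. apply H in Hi. apply in_app_or in Hi. destruct Hi; auto.
  - intros i Hi. apply H. apply in_or_app; auto.
  - intros i Hi. apply H. apply in_or_app; auto.
Qed.

Lemma has_sum_ex {I} (u : I -> A) S :
  (forall l, NoDup l -> (forall i, In i l -> S i) -> exists w, fsum A u l = Some w) ->
  exists v, has_sum A u S v.
Proof.
  intros Hdef.
  destruct (dir_complete HA (D:=psums u S)) as [v Hv].
  - split.
    + exists (pzero A), []. repeat split; auto. constructor. intros i [].
    + intros x y [l1 [N1 [S1 E1]]] [l2 [N2 [S2 E2]]].
      destruct (nodup_union S l1 l2 S1 S2) as [l [N [Sl [I1 I2]]]].
      destruct (Hdef l N Sl) as [w Ew].
      exists w. split. exists l; auto.
      rewrite fsum_osum in E1, E2, Ew.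
      split.
      * destruct (osum_sub N1 I1 N Ew) as [a [Ea Ha]]. rewrite E1 in Ea; injection Ea as ->; exact Ha.
      * destruct (osum_sub N2 I2 N Ew) as [a [Ea Ha]]. rewrite E2 in Ea; injection Ea as ->; exact Ha.
  - exists v. split; auto.
Qed.

Lemma countable_sub {X} (S S' : X -> Prop) : (forall x, S' x -> S x) -> countable S -> countable S'.
Proof. intros H [g Hg]. exists g. intros; apply Hg; auto. Qed.

Lemma countable_union {X Y} (S : X -> Prop) (T : X -> Y -> Prop) :
  countable S -> (forall x, S x -> countable (T x)) ->
  countable (fun y => exists x, S x /\ T x y).
Proof.
  intros [g Hg] HT.
  set (P := fun x (h : Y -> nat) => forall y y', T x y -> T x y' -> h y = h y' -> y = y').
  set (gT := fun x => epsilon (inhabits (fun _ : Y => 0)) (P x)).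
  assert (HgT : forall x, S x -> P x (gT x)).
  { intros x Hx. apply epsilon_spec. apply HT; auto. }
  exists (fun y => match excluded_middle_informative (exists x, S x /\ T x y) with
                   | left H => let x := proj1_sig (constructive_indefinite_description _ H) in
                               Cantor.to_nat (g x, gT x y)
                   | right _ => 0 end).
  intros y y' Hy Hy'.
  destruct (excluded_middle_informative (exists x, S x /\ T x y)) as [H|H]; [|contradiction].
  destruct (excluded_middle_informative (exists x, S x /\ T x y')) as [H'|H']; [|contradiction].
  destruct (constructive_indefinite_description _ H) as [x [Sx Tx]].
  destruct (constructive_indefinite_description _ H') as [x' [Sx' Tx']]. cbn [proj1_sig].
  intros E. apply (f_equal Cantor.of_nat) in E. rewrite !Cantor.cancel_of_to in E.
  injection E as E1 E2.
  assert (x = x') by (apply Hg; auto). subst x'.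
  apply (HgT x Sx); auto.
Qed.

Lemma fsum_any {I} (u : I -> A) (S : I -> Prop) :
  (forall x, ~ S x -> u x = pzero A) ->
  forall l, NoDup l -> exists l', NoDup l' /\ incl l' l /\ (forall i, In i l' -> S i) /\ fsum A u l = fsum A u l'.
Proof.
  intros H0. induction l as [|a l IH]; intros N.
  - exists []. split; [constructor|split; [intros i []|split; [intros i []|reflexivity]]].
  - inversion N as [|? ? Hna Hnd]; subst. destruct (IH Hnd) as [l' [N' [I' [S' E']]]].
    destruct (classic (S a)).
    + exists (a :: l'). split; [|split; [|split]].
      * constructor; [intro Hin; apply Hna; apply I'; auto | auto].
      * intros i [Hi|Hi]; [left; auto | right; auto].
      * intros i [Hi|Hi]; subst; auto.
      * simpl. now rewrite E'.
    + exists l'. repeat split; auto.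
      * intros i Hi; right; auto.
      * simpl. rewrite E', H0 by auto. destruct (fsum A u l'); simpl; auto. apply add0l.
Qed.

Lemma isW_fsum {X} (m : X -> A) : isW A m -> forall l, NoDup l -> exists w, fsum A m l = Some w.
Proof.
  intros [_ [v [Hd _]]] l N.
  destruct (fsum_any m (supp A m)) with (l := l) as [l' [N' [_ [S' E]]]]; auto.
  - intros x Hx. apply NNPP; exact Hx.
  - rewrite E. apply Hd; auto.
Qed.

Lemma cont_add' (D : A -> Prop) s y : directed (le A) D -> is_sup A D s ->
  (forall x, D x -> exists w, padd A x y = Some w) ->
  exists v, padd A s y = Some v /\ is_sup A (fun w => exists x, D x /\ padd A x y = Some w) v.
Proof.
  intros Hdir Hs Hd.
  destruct (dir_complete HA (D:=fun w => exists x, D x /\ padd A x y = Some w)) as [v Hv].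
  - destruct Hdir as [[x0 Hx0] Hdir]. split.
    + destruct (Hd x0 Hx0) as [w Hw]. exists w, x0; auto.
    + intros w1 w2 [x1 [D1 E1]] [x2 [D2 E2]].
      destruct (Hdir x1 x2 D1 D2) as [z [Dz [L1 L2]]].
      destruct (Hd z Dz) as [w Hw]. exists w. split. exists z; auto.
      split.
      * destruct (plus_mono L1 (le_refl HA y) Hw) as [c [Ec Lc]].
        rewrite E1 in Ec; injection Ec as ->; exact Lc.
      * destruct (plus_mono L2 (le_refl HA y) Hw) as [c [Ec Lc]].
        rewrite E2 in Ec; injection Ec as ->; exact Lc.
  - exists v. split; auto. apply (proj2 (cont_add HA y Hdir Hs v)). split; auto.
Qed.

Lemma fin_cont {I Y} (P : I -> Prop) (g : I -> Y -> A) (h : Y -> A) (L : list Y) :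
  (exists i, P i) ->
  (forall i j, P i -> P j -> exists k, P k /\ forall y, le A (g i y) (g k y) /\ le A (g j y) (g k y)) ->
  (forall y, is_sup A (fun a => exists i, P i /\ a = g i y) (h y)) ->
  (forall i, P i -> exists a, fsum A (g i) L = Some a) ->
  exists s, fsum A h L = Some s /\ is_sup A (fun a => exists i, P i /\ fsum A (g i) L = Some a) s.
Proof.
  intros Hne Hdir Hsup. induction L as [|y L IH]; intros Hdef.
  - exists (pzero A). split; auto. destruct Hne as [i Pi].
    split; [exact Logic.I|split].
    + intros a [j [Pj Ej]]. simpl in Ej. injection Ej as <-. apply (le_refl HA).
    + intros t _ Ht. apply Ht. exists i; auto.
  - assert (HdefL : forall i, P i -> exists a, fsum A (g i) L = Some a).
    { intros i Pi. destruct (Hdef i Pi) as [a Ha]. simpl in Ha.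
      destruct (fsum A (g i) L) as [b|]; simpl in Ha; [eauto|discriminate]. }
    destruct (IH HdefL) as [sg [Esg Hsg]].
    assert (DG : directed (le A) (fun a => exists i, P i /\ a = g i y)).
    { destruct Hne as [i0 P0]. split. exists (g i0 y), i0; auto.
      intros a b [i [Pi ->]] [j [Pj ->]]. destruct (Hdir i j Pi Pj) as [k [Pk Hk]].
      exists (g k y). split. exists k; auto. apply Hk. }
    assert (DS : directed (le A) (fun a => exists i, P i /\ fsum A (g i) L = Some a)).
    { destruct Hne as [i0 P0]. split. destruct (HdefL i0 P0) as [a Ha]. exists a, i0; auto.
      intros a b [i [Pi Ea]] [j [Pj Eb]]. destruct (Hdir i j Pi Pj) as [k [Pk Hk]].
      destruct (HdefL k Pk) as [c Ec]. exists c. split. exists k; auto.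
      rewrite fsum_osum in Ea, Eb, Ec. split.
      - destruct (osum_mono (g i) (g k) L c (fun z _ => proj1 (Hk z)) Ec) as [a' [Ea' La']].
        rewrite Ea in Ea'; injection Ea' as ->; exact La'.
      - destruct (osum_mono (g j) (g k) L c (fun z _ => proj2 (Hk z)) Ec) as [a' [Ea' La']].
        rewrite Eb in Ea'; injection Ea' as ->; exact La'. }
    assert (Hi : forall i, P i -> exists w, padd A (g i y) sg = Some w /\
               is_sup A (fun w => exists b, (exists j, P j /\ fsum A (g j) L = Some b) /\ padd A b (g i y) = Some w) w).
    { intros i Pi.
      destruct (cont_add' _ sg (g i y) DS Hsg) as [w [Ew Hw]].
      - intros b [j [Pj Eb]]. destruct (Hdir i j Pi Pj) as [k [Pk Hk]].
        destruct (Hdef k Pk) as [c Ec]. simpl in Ec.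
        destruct (fsum A (g k) L) as [bk|] eqn:Ebk; simpl in Ec; [|discriminate].
        rewrite fsum_osum in Eb, Ebk.
        destruct (osum_mono (g j) (g k) L bk (fun z _ => proj2 (Hk z)) Ebk) as [b' [Eb' Lb']].
        rewrite Eb in Eb'; injection Eb' as <-.
        rewrite (add_comm HA) in Ec.
        destruct (plus_mono Lb' (proj1 (Hk y)) Ec) as [w [Ew _]]. eauto.
      - exists w. split. rewrite (add_comm HA); exact Ew. exact Hw. }
    destruct (cont_add' _ (h y) sg DG (Hsup y)) as [v [Ev Hv]].
    { intros a [i [Pi ->]]. destruct (Hi i Pi) as [w [Ew _]]. eauto. }
    exists v. split.
    + simpl. rewrite Esg. simpl. exact Ev.
    + split; [exact Logic.I|split].
      * intros a [i [Pi Ea]]. simpl in Ea.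
        destruct (fsum A (g i) L) as [b|] eqn:Eb; simpl in Ea; [|discriminate].
        destruct (Hi i Pi) as [w [Ew _]].
        apply (le_trans HA) with w.
        -- destruct (plus_mono (le_refl HA (g i y)) (proj1 (proj2 Hsg) b (ex_intro _ i (conj Pi Eb))) Ew) as [c [Ec Lc]].
           rewrite Ea in Ec; injection Ec as ->; exact Lc.
        -- apply (proj1 (proj2 Hv)). exists (g i y). split; auto. exists i; auto.
      * intros t _ Ht. apply (proj2 (proj2 Hv)); [exact Logic.I|].
        intros w [a [[i [Pi ->]] Ew]].
        destruct (Hi i Pi) as [w' [Ew' Hw']]. rewrite Ew in Ew'; injection Ew' as <-.
        apply (proj2 (proj2 Hw')); [exact Logic.I|].
        intros z [b [[j [Pj Eb]] Ez]].
        destruct (Hdir i j Pi Pj) as [k [Pk Hk]].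
        destruct (Hdef k Pk) as [c Ec].
        apply (le_trans HA) with c.
        -- simpl in Ec. destruct (fsum A (g k) L) as [bk|] eqn:Ebk; simpl in Ec; [|discriminate].
           rewrite fsum_osum in Eb, Ebk.
           destruct (osum_mono (g j) (g k) L bk (fun z _ => proj2 (Hk z)) Ebk) as [b' [Eb' Lb']].
           rewrite Eb in Eb'; injection Eb' as <-.
           rewrite (add_comm HA) in Ec.
           destruct (plus_mono Lb' (proj1 (Hk y)) Ec) as [w2 [Ew2 Lw2]].
           rewrite Ez in Ew2; injection Ew2 as ->; exact Lw2.
        -- apply Ht. exists k; auto.
Qed.

Lemma is_sup_ext (D D' : A -> Prop) s : (forall a, D a <-> D' a) -> is_sup A D s -> is_sup A D' s.
Proof.
  intros H [_ [H1 H2]]. split; [exact Logic.I|split].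
  - intros x Hx; apply H1, H, Hx.
  - intros t _ Ht. apply H2; [exact Logic.I|]. intros x Hx; apply Ht, H, Hx.
Qed.

Definition oget (o : option A) : A := match o with Some a => a | None => pzero A end.

Lemma dag_has_sum {X Y} (f : X -> Y -> A) (m : X -> A) y :
  isW A m -> has_sum A (fun x => pmul A (m x) (f x y)) (supp A m) (dagger A f m y).
Proof.
  intros Hm. destruct (has_top HA) as [T HT].
  destruct (has_sum_ex (fun x => pmul A (m x) (f x y)) (supp A m)) as [v Hv].
  - intros l N _. destruct (isW_fsum m Hm l N) as [a Ha].
    rewrite fsum_osum in Ha. apply (osum_mul_r T) in Ha.
    destruct (osum_mono (fun x => pmul A (m x) (f x y)) (fun x => pmul A (m x) T) l _
      (fun x _ => mul_mono_l (m x) (HT (f x y))) Ha) as [w [Ew _]].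
    exists w. rewrite fsum_osum. exact Ew.
  - unfold dagger. rewrite (isum_eq _ _ _ Hv). exact Hv.
Qed.

Lemma dag_zero {X Y} (f : X -> Y -> A) m y : isW A m ->
  (forall x, supp A m x -> f x y = pzero A) -> dagger A f m y = pzero A.
Proof.
  intros Hm H0. destruct (dag_has_sum f m y Hm) as [_ [_ [_ Hl]]].
  apply (le_antisym HA); [|apply le_0].
  apply Hl; [exact Logic.I|]. intros w [l [N [Sl E]]].
  rewrite fsum_osum in E. rewrite (osum_ext _ (fun _ => Some (pzero A))) in E.
  - rewrite osum_zero in E. injection E as <-. apply (le_refl HA).
  - intros i Hi. rewrite H0 by auto. now rewrite (mul_zero_r HA).
Qed.

Lemma dag_isW {X Y} (f : X -> Y -> A) m : isKl A f -> isW A m -> isW A (dagger A f m).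
Proof.
  intros Hf Hm. destruct (has_top HA) as [T HT]. split.
  - apply (countable_sub (fun y => exists x, supp A m x /\ supp A (f x) y)).
    + intros y Hy. apply NNPP; intro Hn. apply Hy. apply dag_zero; auto.
      intros x Hx. apply NNPP; intro Hfx. apply Hn. exists x; split; auto.
    + apply countable_union. exact (proj1 Hm). intros x _. exact (proj1 (Hf x)).
  - apply has_sum_ex. intros L NL _.
    set (P := fun K : list X => NoDup K /\ forall i, In i K -> supp A m i).
    set (g := fun K y => oget (fsum A (fun x => pmul A (m x) (f x y)) K)).
    assert (gdef : forall K y, P K -> fsum A (fun x => pmul A (m x) (f x y)) K = Some (g K y)).
    { intros K y [NK SK]. destruct (dag_has_sum f m y Hm) as [Hd _].
      destruct (Hd K NK SK) as [w Hw]. unfold g. rewrite Hw. reflexivity. }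
    destruct (fin_cont P g (dagger A f m) L) as [s [Es _]].
    + exists []. split. constructor. intros i [].
    + intros K1 K2 [N1 S1] [N2 S2].
      destruct (nodup_union _ K1 K2 S1 S2) as [K [NK [SK [I1 I2]]]].
      assert (PK : P K) by (split; auto).
      exists K. split. exact PK. intros y.
      pose proof (gdef K y PK) as EK. rewrite fsum_osum in EK. split.
      * destruct (osum_sub N1 I1 NK EK) as [a [Ea La]].
        rewrite <- fsum_osum, (gdef K1 y (conj N1 S1)) in Ea. injection Ea as ->. exact La.
      * destruct (osum_sub N2 I2 NK EK) as [a [Ea La]].
        rewrite <- fsum_osum, (gdef K2 y (conj N2 S2)) in Ea. injection Ea as ->. exact La.
    + intros y. apply (is_sup_ext (psums (fun x => pmul A (m x) (f x y)) (supp A m))).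
      * intros a. split.
        -- intros [K [NK [SK E]]]. exists K. split. split; auto.
           rewrite (gdef K y (conj NK SK)) in E. injection E as ->. reflexivity.
        -- intros [K [PK ->]]. destruct PK as [NK SK]. exists K. split; [auto|split; [auto|]].
           apply gdef. split; auto.
      * exact (proj2 (dag_has_sum f m y Hm)).
    + intros K PK.
      set (bx := fun x => oget (fsum A (f x) L)).
      assert (Hbx : forall x, fsum A (f x) L = Some (bx x)).
      { intros x. destruct (isW_fsum (f x) (Hf x) L NL) as [b Hb]. unfold bx. rewrite Hb. reflexivity. }
      pose proof PK as [NK SK].
      destruct (isW_fsum m Hm K NK) as [a Ha].
      rewrite fsum_osum in Ha. apply (osum_mul_r T) in Ha.
      destruct (osum_mono (fun x => pmul A (m x) (bx x)) (fun x => pmul A (m x) T) K _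
        (fun x _ => mul_mono_l (m x) (HT (bx x))) Ha) as [w [Ew _]].
      exists w. rewrite fsum_osum.
      rewrite (osum_ext _ (fun y => osum (fun x => Some (pmul A (m x) (f x y))) K)).
      * rewrite <- (fubini (fun x y => Some (pmul A (m x) (f x y))) K L). rewrite <- Ew.
        apply osum_ext. intros x _.
        apply osum_mul_l. rewrite <- fsum_osum. apply Hbx.
      * intros y _. rewrite <- fsum_osum. symmetry. apply gdef. exact PK.
    + eauto.
Qed.

Lemma le_isW {Y} (d m2 : Y -> A) : (forall y, le A (d y) (m2 y)) -> isW A m2 -> isW A d.
Proof.
  intros Hle Hm. split.
  - apply (countable_sub (supp A m2)); [|exact (proj1 Hm)].
    intros y Hy E. apply Hy. apply (le_antisym HA); [|apply le_0]. rewrite <- E. apply Hle.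
  - apply has_sum_ex. intros l N _. destruct (isW_fsum m2 Hm l N) as [b Hb].
    rewrite fsum_osum in Hb.
    destruct (osum_mono d m2 l b (fun y _ => Hle y) Hb) as [a [Ea _]].
    exists a. rewrite fsum_osum. exact Ea.
Qed.

Lemma pointwise_leW {Y} (m1 m2 : Y -> A) : (forall y, le A (m1 y) (m2 y)) -> isW A m2 -> leW A m1 m2.
Proof.
  intros Hle Hm.
  set (d := fun y => epsilon (inhabits (pzero A)) (fun w => padd A (m1 y) w = Some (m2 y))).
  assert (Hd : forall y, padd A (m1 y) (d y) = Some (m2 y)).
  { intros y. unfold d. apply epsilon_spec. apply Hle. }
  exists d. split; auto.
  apply (le_isW d m2); auto. intros y. exact (le_addr (Hd y)).
Qed.

Lemma leW_le {Y} (m1 m2 : Y -> A) : leW A m1 m2 -> forall y, le A (m1 y) (m2 y).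
Proof. intros [d [_ H]] y. exact (le_addl (H y)). Qed.

End S.

Theorem lemmaA4 (A : PSR) (HA : PSR_axioms A) (X Y : Type) :
  forall (D : (X -> Y -> A) -> Prop) (s : X -> Y -> A),
    (forall f, D f -> @isKl A X Y f) ->
    directed (@leKl A X Y) D ->
    is_sup_in (@isKl A X Y) (@leKl A X Y) D s ->
    is_sup_in (@isWW A X Y) (@leWW A X Y)
      (fun h => exists f, D f /\ h = @dagger A X Y f) (@dagger A X Y s).
Proof.
  intros D s HD Hdir [Hs [Hub Hleast]].
  assert (DD : forall x y, directed (le A) (fun a => exists f, D f /\ a = f x y)).
  { intros x y. destruct Hdir as [[f0 D0] Hd]. split. exists (f0 x y), f0; auto.
    intros a b [f [Df ->]] [g [Dg ->]]. destruct (Hd f g Df Dg) as [k [Dk [Lf Lg]]].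
    exists (k x y). split. exists k; auto. split; apply (leW_le A); auto. }
  set (sh := fun x y => epsilon (inhabits (pzero A)) (is_sup A (fun a => exists f, D f /\ a = f x y))).
  assert (Hsh : forall x y, is_sup A (fun a => exists f, D f /\ a = f x y) (sh x y)).
  { intros x y. unfold sh. apply epsilon_spec. apply (dir_complete HA). apply DD. }
  assert (Lsh : forall x y, le A (sh x y) (s x y)).
  { intros x y. apply (proj2 (proj2 (Hsh x y))); [exact Logic.I|].
    intros a [f [Df ->]]. apply (leW_le A). apply Hub; auto. }
  assert (Ksh : isKl A sh).
  { intros x. apply (le_isW A HA (sh x) (s x)); auto. }
  assert (Ush : leKl A s sh).
  { apply Hleast; auto. intros f Df x. apply (pointwise_leW A HA); auto.
    intros y. apply (proj1 (proj2 (Hsh x y))). exists f; auto. }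
  assert (Hps : forall x y, is_sup A (fun a => exists f, D f /\ a = f x y) (s x y)).
  { intros x y. replace (s x y) with (sh x y). apply Hsh.
    apply (le_antisym HA); auto. apply (leW_le A); auto. }
  split; [|split].
  - intros m Hm. apply (dag_isW A HA); auto.
  - intros h [f [Df ->]] m Hm. apply (pointwise_leW A HA); [|apply (dag_isW A HA); auto].
    intros y. destruct (dag_has_sum A HA f m y Hm) as [_ [_ [_ Hl]]].
    apply Hl; [exact Logic.I|]. intros w [l [N [Sl E]]].
    destruct (dag_has_sum A HA s m y Hm) as [Hd [_ [Hu _]]].
    destruct (Hd l N Sl) as [w' Ew'].
    apply (le_trans HA) with w'.
    + rewrite (fsum_osum A) in E, Ew'.
      destruct (osum_mono A HA (fun x => pmul A (m x) (f x y)) (fun x => pmul A (m x) (s x y)) l w'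
        (fun x _ => mul_mono_l A HA (m x) (leW_le A _ _ (Hub f Df x) y)) Ew') as [a [Ea La]].
      rewrite E in Ea. injection Ea as ->. exact La.
    + apply Hu. exists l; auto.
  - intros t Ht Hup m Hm. apply (pointwise_leW A HA); [|apply Ht; auto].
    intros y. destruct (dag_has_sum A HA s m y Hm) as [_ [_ [_ Hl]]].
    apply Hl; [exact Logic.I|]. intros w [K [NK [SK E]]].
    destruct (fin_cont A HA D (fun f x => pmul A (m x) (f x y)) (fun x => pmul A (m x) (s x y)) K)
      as [s' [Es' Hs']].
    + exact (proj1 Hdir).
    + intros f g Df Dg. destruct (proj2 Hdir f g Df Dg) as [k [Dk [Lf Lg]]].
      exists k. split; auto. intros x. split; apply (mul_mono_l A HA); apply (leW_le A); auto.
    + intros x. apply (is_sup_ext A (fun w => exists a, (exists f, D f /\ a = f x y) /\ w = pmul A (m x) a)).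
      * intros a. split.
        -- intros [b [[f [Df ->]] ->]]. exists f; auto.
        -- intros [f [Df ->]]. exists (f x y). split; auto. exists f; auto.
      * apply (cont_mul_r HA). apply DD. apply Hps.
    + intros f Df. destruct (dag_has_sum A HA f m y Hm) as [Hd _]. apply Hd; auto.
    + rewrite E in Es'. injection Es' as <-.
      apply (proj2 (proj2 Hs')); [exact Logic.I|].
      intros a [f [Df Ea]].
      apply (le_trans HA) with (dagger A f m y).
      * destruct (dag_has_sum A HA f m y Hm) as [_ [_ [Hu _]]]. apply Hu. exists K; auto.
      * apply (leW_le A). apply Hup; auto. exists f; auto.
Qed.
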